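(* $$\sum_{n=0}^{\infty}\Big(\sum_{j=0}^{n}\frac{1}{(2j+1)(2(n-j)+1)}\Big)^2=\frac{\pi^4}{32}.$$ Equivalently, $$1^2+\Big(1\cdot\tfrac13+\tfrac13\cdot 1\Big)^2+\Big(1\cdot\tfrac15+\tfrac13\cdot\tfrac13+\tfrac15\cdot 1\Big)^2+\Big(1\cdot\tfrac17+\tfrac13\cdot\tfrac15+\tfrac15\cdot\tfrac13+\tfrac17\cdot 1\Big)^2+\cdots=\frac{\pi^4}{32}.$$ *)

(* Defs.v *)
From Stdlib Require Import Reals.
From Coquelicot Require Import Coquelicot.
Open Scope R_scope.

(* a n = sum_{j=0}^{n} 1/((2j+1)(2(n-j)+1)) ; sum_f_R0 f n has n+1 terms *)
Definition inner_sum (n : nat) : R :=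
  sum_f_R0 (fun j => / ((2 * INR j + 1) * (2 * INR (n - j) + 1))) n.

(* Main.v *)
Require Import Defs.
From Stdlib Require Import Reals Lra Lia.
From Coquelicot Require Import Coquelicot.
Open Scope R_scope.


Fixpoint sm (n : nat) (f : nat -> R) : R :=
  match n with O => 0 | S k => sm k f + f k end.

Lemma sm_ext n f g : (forall i, (i < n)%nat -> f i = g i) -> sm n f = sm n g.
Proof. induction n; simpl; intros H; auto. rewrite IHn; [rewrite H|]; auto; intros; apply H; lia. Qed.

Lemma sm_plus n f g : sm n (fun i => f i + g i) = sm n f + sm n g.
Proof. induction n; simpl; [ring|rewrite IHn; ring]. Qed.

Lemma sm_scal n c f : sm n (fun i => c * f i) = c * sm n f.
Proof. induction n; simpl; [ring|rewrite IHn; ring]. Qed.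

Lemma sm_opp n f : sm n (fun i => - f i) = - sm n f.
Proof. induction n; simpl; [ring|rewrite IHn; ring]. Qed.

Lemma sm_zero n : sm n (fun _ => 0) = 0.
Proof. induction n; simpl; [ring|rewrite IHn; ring]. Qed.

Lemma sm_le n f g : (forall i, (i < n)%nat -> f i <= g i) -> sm n f <= sm n g.
Proof. induction n; simpl; intros H; [lra|]. apply Rplus_le_compat; [apply IHn|apply H]; auto; intros; apply H; lia. Qed.

Lemma sm_nonneg n f : (forall i, (i < n)%nat -> 0 <= f i) -> 0 <= sm n f.
Proof. intros H. rewrite <- (sm_zero n). apply sm_le; auto. Qed.

Lemma sm_split n m f : sm (n + m) f = sm n f + sm m (fun i => f (n + i)%nat).
Proof. induction m; simpl. rewrite Nat.add_0_r; ring. rewrite Nat.add_succ_r; simpl; rewrite IHm; ring. Qed.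

Lemma sm_shift n f : sm (S n) f = f O + sm n (fun i => f (S i)).
Proof. change (S n) with (1 + n)%nat. rewrite sm_split. simpl. ring. Qed.

Lemma sm_rev n f : sm n f = sm n (fun i => f (n - 1 - i)%nat).
Proof.
  induction n; auto.
  rewrite (sm_shift n (fun i => f (S n - 1 - i)%nat)). change (sm (S n) f) with (sm n f + f n).
  rewrite IHn. replace (S n - 1 - 0)%nat with n by lia.
  rewrite Rplus_comm. f_equal. apply sm_ext. intros. f_equal. lia.
Qed.

Lemma sm_swap n m (f : nat -> nat -> R) :
  sm n (fun i => sm m (fun j => f i j)) = sm m (fun j => sm n (fun i => f i j)).
Proof.
  induction n; simpl. rewrite sm_zero; auto.
  rewrite IHn, <- sm_plus. auto.
Qed.

Lemma sm_mul n m f g : sm n f * sm m g = sm n (fun i => sm m (fun j => f i * g j)).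
Proof.
  rewrite Rmult_comm, <- sm_scal. apply sm_ext; intros.
  rewrite Rmult_comm, <- sm_scal. auto.
Qed.

Lemma sm_single n c F :
  sm n (fun i => if Nat.eqb c i then F i else 0) = if Nat.ltb c n then F c else 0.
Proof.
  induction n; simpl; auto. rewrite IHn.
  destruct (Nat.eqb_spec c n); destruct (Nat.ltb_spec c n); destruct (Nat.ltb_spec c (S n)); subst; try lia; simpl; ring.
Qed.

Lemma sm_mono n m f : (n <= m)%nat -> (forall i, (i < m)%nat -> 0 <= f i) -> sm n f <= sm m f.
Proof.
  intros H Hf. replace m with (n + (m - n))%nat by lia. rewrite sm_split.
  assert (0 <= sm (m - n) (fun i => f (n + i)%nat)); [apply sm_nonneg; intros; apply Hf; lia| lra].
Qed.

Lemma sm_prefix n p f : (p <= n)%nat -> (forall i, (p <= i < n)%nat -> f i = 0) -> sm n f = sm p f.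
Proof.
  intros H Hf. replace n with (p + (n - p))%nat by lia. rewrite sm_split.
  rewrite (sm_ext (n - p) (fun i => f (p + i)%nat) (fun _ => 0)). rewrite sm_zero; ring. intros; apply Hf; lia.
Qed.

Lemma sm_abs n f : Rabs (sm n f) <= sm n (fun i => Rabs (f i)).
Proof. induction n; simpl. rewrite Rabs_R0; lra. eapply Rle_trans. apply Rabs_triang. lra. Qed.

Lemma sum_f_sm f k : sum_f_R0 f k = sm (S k) f.
Proof. induction k as [|k IH]; [simpl; ring|]. change (sum_f_R0 f (S k)) with (sum_f_R0 f k + f (S k)). rewrite IH. reflexivity. Qed.

Lemma sm_minus n f g : sm n (fun i => f i - g i) = sm n f - sm n g.
Proof. induction n; simpl; [ring|rewrite IHn; ring]. Qed.

Lemma sm_const n c : sm n (fun _ => c) = INR n * c.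
Proof. induction n; simpl sm; [simpl; ring|rewrite IHn, S_INR; ring]. Qed.

Lemma sm_le_shift n h : (forall i, 0 <= h i) -> sm n h <= h O + sm n (fun i => h (S i)).
Proof.
  intros H. destruct n. simpl. specialize (H O). lra.
  rewrite sm_shift. apply Rplus_le_compat_l. apply sm_mono; auto.
Qed.


Lemma key n K (k1 k2 : nat -> nat -> nat) (f g : nat -> nat -> R) :
 (forall a b, (a<n)%nat -> (b<n)%nat -> (k1 a b < K)%nat) ->
 sm n (fun a => sm n (fun b => sm n (fun c => sm n (fun d =>
   if Nat.eqb (k1 a b) (k2 c d) then f a b * g c d else 0))))
 = sm K (fun v => sm n (fun a => sm n (fun b => if Nat.eqb (k1 a b) v then f a b else 0))
                * sm n (fun c => sm n (fun d => if Nat.eqb (k2 c d) v then g c d else 0))).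
Proof.
  intros Hk.
  transitivity (sm K (fun v => sm n (fun a => sm n (fun b => sm n (fun c => sm n (fun d =>
     (if Nat.eqb (k1 a b) v then f a b else 0) * (if Nat.eqb (k2 c d) v then g c d else 0))))))).
  2:{ apply sm_ext; intros v _. rewrite sm_mul. apply sm_ext; intros a _.
      rewrite sm_swap. apply sm_ext; intros b _. rewrite sm_mul. auto. }
  symmetry.
  rewrite (sm_swap K n). apply sm_ext; intros a Ha.
  rewrite (sm_swap K n). apply sm_ext; intros b Hb.
  rewrite (sm_swap K n). apply sm_ext; intros c _.
  rewrite (sm_swap K n). apply sm_ext; intros d _.
  rewrite (sm_ext K _ (fun v => if Nat.eqb (k1 a b) v then f a b * (if Nat.eqb (k2 c d) v then g c d else 0) else 0)).
  2:{ intros v _. destruct (Nat.eqb (k1 a b) v); ring. }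
  rewrite sm_single. specialize (Hk a b Ha Hb).
  destruct (Nat.ltb_spec (k1 a b) K); try lia.
  destruct (Nat.eqb_spec (k1 a b) (k2 c d)); destruct (Nat.eqb_spec (k2 c d) (k1 a b)); try lia; ring.
Qed.


Definition u (k : nat) : R := / (2 * INR k + 1).

Lemma INR_ge0 k : 0 <= INR k. Proof. apply pos_INR. Qed.

Lemma u_pos k : 0 < u k.
Proof. unfold u. apply Rinv_0_lt_compat. pose proof (INR_ge0 k). lra. Qed.

Lemma u_le1 k : u k <= 1.
Proof. unfold u. pose proof (INR_ge0 k). rewrite <- Rinv_1. apply Rinv_le_contravar; lra. Qed.

Lemma u_anti k l : (k <= l)%nat -> u l <= u k.
Proof. intros H. unfold u. apply le_INR in H. pose proof (INR_ge0 k). apply Rinv_le_contravar; lra. Qed.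

Lemma u_le_inv k : u k <= / (INR k + 1).
Proof. unfold u. pose proof (INR_ge0 k). apply Rinv_le_contravar; lra. Qed.

Lemma inner_sm v : inner_sum v = sm (S v) (fun j => u j * u (v - j)).
Proof.
  unfold inner_sum. rewrite sum_f_sm. apply sm_ext. intros j Hj.
  unfold u. rewrite Rinv_mult. auto.
Qed.

Lemma inner_closed v : inner_sum v = sm (S v) u / (INR v + 1).
Proof.
  rewrite inner_sm.
  rewrite (sm_ext _ _ (fun j => / (2 * (INR v + 1)) * (u j + u (v - j)))).
  2:{ intros j Hj. unfold u. rewrite minus_INR by lia.
      assert (0 <= INR j) by apply INR_ge0. assert (INR j <= INR v) by (apply le_INR; lia).
      field. repeat split; lra. }
  rewrite sm_scal, sm_plus.
  rewrite (sm_rev (S v) (fun j => u (v - j)%nat)).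
  rewrite (sm_ext (S v) (fun i => u (v - (S v - 1 - i))%nat) u).
  2:{ intros i Hi. f_equal. lia. }
  pose proof (INR_ge0 v). field. lra.
Qed.

Lemma inner_nonneg v : 0 <= inner_sum v.
Proof. rewrite inner_sm. apply sm_nonneg. intros. pose proof (u_pos i); pose proof (u_pos (v-i)); nra. Qed.

Lemma sm_u_le n : sm n u <= INR n.
Proof. induction n. simpl; lra. change (sm (S n) u) with (sm n u + u n). rewrite S_INR. pose proof (u_le1 n). lra. Qed.

Lemma inner_le1 v : inner_sum v <= 1.
Proof.
  rewrite inner_closed. pose proof (sm_u_le (S v)). rewrite S_INR in H. pose proof (INR_ge0 v).
  apply Rmult_le_reg_r with (INR v + 1). lra. unfold Rdiv. rewrite Rmult_assoc, Rinv_l; lra.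
Qed.

Definition A n v := sm n (fun j => sm n (fun k => if Nat.eqb (j + k) v then u j * u k else 0)).
Definition Bf n v := sm n (fun j => sm n (fun l => if Nat.eqb (j + (n - l)) v then u j * u l else 0)).
Definition Box n := sm n (fun j => sm n (fun k => sm n (fun l => sm n (fun m =>
   if Nat.eqb (j + k) (l + m) then (u j * u k) * (u l * u m) else 0)))).

Lemma Box_A n : Box n = sm (2 * n) (fun v => A n v * A n v).
Proof.
  unfold Box, A. apply key. intros; lia.
Qed.

Lemma Box_B n : Box n = sm (2 * n) (fun v => Bf n v * Bf n v).
Proof.
  unfold Bf.
  rewrite <- (key n (2 * n) (fun a b => a + (n - b))%nat (fun a b => a + (n - b))%nat
     (fun a b => u a * u b) (fun a b => u a * u b)) by (intros; lia).
  unfold Box. apply sm_ext; intros j Hj.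
  rewrite sm_swap. apply sm_ext; intros l Hl.
  rewrite sm_swap. apply sm_ext; intros m Hm.
  apply sm_ext; intros k Hk.
  destruct (Nat.eqb_spec (j + k) (l + m)); destruct (Nat.eqb_spec (j + (n - l)) (m + (n - k))); try lia; ring.
Qed.


Lemma A_eq n v : A n v = sm n (fun j => if Nat.leb j v then
   (if Nat.ltb (v - j) n then u j * u (v - j) else 0) else 0).
Proof.
  unfold A. apply sm_ext; intros j Hj.
  destruct (Nat.leb_spec j v).
  - rewrite (sm_ext n _ (fun k => if Nat.eqb (v - j) k then u j * u k else 0)).
    + rewrite sm_single. auto.
    + intros k Hk. destruct (Nat.eqb_spec (j+k) v); destruct (Nat.eqb_spec (v-j) k); try lia; auto.
  - rewrite (sm_ext n _ (fun _ => 0)). apply sm_zero.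
    intros k Hk. destruct (Nat.eqb_spec (j+k) v); try lia; auto.
Qed.

Lemma sm_cut n v g : (forall j, 0 <= g j) ->
  sm n (fun j => if Nat.leb j v then g j else 0) <= sm (S v) g.
Proof.
  intros Hg. destruct (Nat.le_gt_cases n (S v)).
  - rewrite (sm_ext n _ g). apply sm_mono; auto.
    intros j Hj. destruct (Nat.leb_spec j v); try lia; auto.
  - rewrite (sm_prefix n (S v)) by (try lia; intros i Hi; destruct (Nat.leb_spec i v); try lia; auto).
    apply sm_le. intros i Hi. destruct (Nat.leb_spec i v); try lia; lra.
Qed.

Lemma A_nonneg n v : 0 <= A n v.
Proof.
  rewrite A_eq. apply sm_nonneg. intros j _.
  destruct (Nat.leb j v); [destruct (Nat.ltb (v-j) n)|]; try lra.
  pose proof (u_pos j); pose proof (u_pos (v-j)); nra.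
Qed.

Lemma A_le n v : A n v <= inner_sum v.
Proof.
  rewrite A_eq, inner_sm.
  eapply Rle_trans; [|apply (sm_cut n v (fun j => u j * u (v - j)))].
  - apply sm_le. intros j _. destruct (Nat.leb j v); [destruct (Nat.ltb (v-j) n)|]; try lra.
    pose proof (u_pos j); pose proof (u_pos (v-j)); nra.
  - intros j. pose proof (u_pos j); pose proof (u_pos (v-j)); nra.
Qed.

Lemma A_small n v : (v < n)%nat -> A n v = inner_sum v.
Proof.
  intros Hv. rewrite A_eq, inner_sm.
  rewrite (sm_prefix n (S v)) by (try lia; intros i Hi; destruct (Nat.leb_spec i v); try lia; auto).
  apply sm_ext. intros i Hi. destruct (Nat.leb_spec i v); try lia.
  destruct (Nat.ltb_spec (v - i) n); try lia; auto.
Qed.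

Definition Cc n d := sm n (fun l => if Nat.ltb (l + d) n then u (l + d) * u l else 0).

Lemma Bf_hi n d : Bf n (n + d) = Cc n d.
Proof.
  unfold Bf, Cc. rewrite sm_swap. apply sm_ext; intros l Hl.
  rewrite (sm_ext n _ (fun j => if Nat.eqb (l + d) j then u j * u l else 0)).
  - apply sm_single.
  - intros j Hj. destruct (Nat.eqb_spec (j + (n - l)) (n + d)); destruct (Nat.eqb_spec (l+d) j); try lia; auto.
Qed.

Lemma Bf_lo n d : (S d <= n)%nat -> Bf n (n - S d) = Cc n (S d).
Proof.
  intros Hd. unfold Bf, Cc. apply sm_ext; intros j Hj.
  rewrite (sm_ext n _ (fun l => if Nat.eqb (j + S d) l then u j * u l else 0)).
  - rewrite sm_single. destruct (Nat.ltb (j + S d) n); ring.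
  - intros l Hl. destruct (Nat.eqb_spec (j + (n - l)) (n - S d)); destruct (Nat.eqb_spec (j + S d) l); try lia; auto.
Qed.

Lemma Box_C n : Box n = sm n (fun i => Cc n (S i) * Cc n (S i)) + sm n (fun d => Cc n d * Cc n d).
Proof.
  rewrite Box_B. replace (2 * n)%nat with (n + n)%nat by lia. rewrite sm_split.
  rewrite sm_rev. f_equal.
  - apply sm_ext. intros i Hi. replace (n - 1 - i)%nat with (n - S i)%nat by lia. rewrite Bf_lo by lia. auto.
  - apply sm_ext. intros i Hi. rewrite Bf_hi. auto.
Qed.

Definition Qs n := sm n (fun k => u k * u k).
Definition Ts n := sm n (fun v => inner_sum v ^ 2).

Lemma Cc0 n : Cc n 0 = Qs n.
Proof. unfold Cc, Qs. apply sm_ext. intros l Hl. rewrite Nat.add_0_r. destruct (Nat.ltb_spec l n); try lia; auto. Qed.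

Lemma C_nonneg n d : 0 <= Cc n d.
Proof. unfold Cc. apply sm_nonneg. intros i _. destruct (Nat.ltb (i + d) n); try lra.
  pose proof (u_pos (i+d)); pose proof (u_pos i); nra. Qed.

Lemma C_form n d : (S d <= n)%nat ->
  Cc n (S d) = inner_sum d / 2 - sm (S d) (fun i => u (n - S d + i)) / (2 * INR (S d)).
Proof.
  intros Hd. set (e := S d). set (p := (n - e)%nat).
  unfold Cc. rewrite (sm_prefix n p).
  2: unfold p, e; lia.
  2:{ intros i Hi. destruct (Nat.ltb_spec (i + e) n); try (unfold p, e in *; lia); auto. }
  rewrite (sm_ext p _ (fun l => / (2 * INR e) * (u l - u (e + l)))).
  2:{ intros l Hl. destruct (Nat.ltb_spec (l + e) n); [|unfold p, e in *; lia].
      unfold u, e. rewrite plus_INR, Nat.add_comm. pose proof (INR_ge0 l). pose proof (INR_ge0 (S d)).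
      rewrite S_INR in *. rewrite plus_INR, S_INR. pose proof (INR_ge0 d). field. repeat split; lra. }
  rewrite sm_scal, sm_minus.
  assert (Hn : n = (e + p)%nat) by (unfold p, e; lia).
  assert (Hs : sm n u = sm e u + sm p (fun l => u (e + l)%nat)) by (rewrite Hn at 1; apply sm_split).
  assert (Hn2 : n = (p + e)%nat) by (unfold p, e; lia).
  assert (Hs2 : sm n u = sm p u + sm e (fun l => u (p + l)%nat)) by (rewrite Hn2 at 1; apply sm_split).
  rewrite inner_closed. fold e.
  replace (INR d + 1) with (INR e) by (unfold e; rewrite S_INR; auto).
  assert (0 < INR e) by (unfold e; rewrite S_INR; pose proof (INR_ge0 d); lra).
  field_simplify; try lra.
  assert (E: sm p u - sm p (fun i => u (e+i)%nat) = sm e u - sm e (fun i => u (p+i)%nat)) by lra.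
  rewrite E; auto.
Qed.


Lemma C_zero n d : (n < S d)%nat -> Cc n (S d) = 0.
Proof.
  intros H. unfold Cc. rewrite (sm_ext n _ (fun _ => 0)). apply sm_zero.
  intros l Hl. destruct (Nat.ltb_spec (l + S d) n); try lia; auto.
Qed.

Lemma tail_bounds n d : (S d <= n)%nat ->
  0 <= sm (S d) (fun i => u (n - S d + i)) <= INR (S d) * u (n - S d).
Proof.
  intros H. split. apply sm_nonneg. intros; pose proof (u_pos (n - S d + i)); lra.
  rewrite <- sm_const. apply sm_le. intros. apply u_anti. lia.
Qed.

Lemma C_upper n d : Cc n (S d) <= inner_sum d / 2.
Proof.
  destruct (Nat.le_gt_cases (S d) n).
  - rewrite C_form by auto. pose proof (tail_bounds n d H).
    assert (0 < INR (S d)) by (rewrite S_INR; pose proof (INR_ge0 d); lra).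
    assert (0 <= sm (S d) (fun i => u (n - S d + i)%nat) / (2 * INR (S d))).
    { apply Rmult_le_pos; try lra. left; apply Rinv_0_lt_compat; lra. }
    lra.
  - rewrite C_zero by lia. pose proof (inner_nonneg d); lra.
Qed.

Lemma C_lower n d : (S d <= n)%nat -> inner_sum d / 2 - u (n - S d) / 2 <= Cc n (S d).
Proof.
  intros H. rewrite C_form by auto. pose proof (tail_bounds n d H).
  assert (0 < INR (S d)) by (rewrite S_INR; pose proof (INR_ge0 d); lra).
  assert (sm (S d) (fun i => u (n - S d + i)%nat) / (2 * INR (S d)) <= u (n - S d) / 2).
  { apply Rmult_le_reg_r with (2 * INR (S d)). lra. unfold Rdiv. rewrite Rmult_assoc, Rinv_l by lra.
    replace (u (n - S d) * / 2 * (2 * INR (S d))) with (INR (S d) * u (n - S d)) by (field). lra. }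
  lra.
Qed.

Lemma C_sq_lower n d : (S d <= n)%nat ->
  (inner_sum d / 2) ^ 2 - u (n - S d) / 2 <= Cc n (S d) * Cc n (S d).
Proof.
  intros H. pose proof (C_lower n d H). pose proof (C_nonneg n (S d)).
  pose proof (inner_nonneg d). pose proof (inner_le1 d). pose proof (u_pos (n - S d)).
  set (x := inner_sum d / 2) in *. set (c := Cc n (S d)) in *. set (y := u (n - S d) / 2) in *.
  assert (x <= 1/2) by (unfold x; lra). assert (0 <= x) by (unfold x; lra). assert (0 <= y) by (unfold y; lra).
  destruct (Rle_dec 0 (x - y)).
  - assert ((x - y) * (x - y) <= c * c) by (apply Rmult_le_compat; lra).
    assert (2 * x * y <= y) by nra. nra.
  - assert (x * x <= x * y) by nra. assert (x * y <= y / 2) by nra. nra.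
Qed.

Lemma Box_ge_T n : Ts n <= Box n.
Proof.
  rewrite Box_A. unfold Ts. eapply Rle_trans; [|apply (sm_mono n (2*n))].
  - apply Req_le. apply sm_ext. intros. rewrite A_small; auto. ring.
  - lia.
  - intros. pose proof (A_nonneg n i). nra.
Qed.

Lemma Box_le_T n : Box n <= Ts (2 * n).
Proof.
  rewrite Box_A. unfold Ts. apply sm_le. intros. pose proof (A_nonneg n i). pose proof (A_le n i). nra.
Qed.

Lemma Box_upper n : Box n <= Qs n * Qs n + Ts n / 2.
Proof.
  rewrite Box_C. rewrite <- Cc0.
  pose proof (sm_le_shift n (fun d => Cc n d * Cc n d)) as H.
  assert (H' : forall i, 0 <= Cc n i * Cc n i) by (intros; pose proof (C_nonneg n i); nra).
  specialize (H H'). simpl in H.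
  assert (sm n (fun i => Cc n (S i) * Cc n (S i)) <= Ts n / 4).
  { unfold Ts. replace (sm n (fun v => inner_sum v ^ 2) / 4) with (sm n (fun v => (inner_sum v / 2) ^ 2)).
    - apply sm_le. intros i _. pose proof (C_upper n i). pose proof (C_nonneg n (S i)). nra.
    - unfold Rdiv. rewrite Rmult_comm, <- sm_scal. apply sm_ext. intros; field. }
  lra.
Qed.

Theorem main_upper n : Ts n <= 2 * (Qs n * Qs n).
Proof. pose proof (Box_ge_T n). pose proof (Box_upper n). lra. Qed.

Theorem main_lower n m : (S m <= n)%nat ->
  Qs n * Qs n + Ts m / 2 - INR m * u (n - m) <= Ts (2 * n).
Proof.
  intros Hm. eapply Rle_trans; [|apply Box_le_T]. rewrite Box_C.
  assert (H1 : sm m (fun i => Cc n (S i) * Cc n (S i)) <= sm n (fun i => Cc n (S i) * Cc n (S i))).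
  { apply sm_mono. lia. intros; pose proof (C_nonneg n (S i)); nra. }
  assert (H2 : sm n (fun d => Cc n d * Cc n d) = Qs n * Qs n + sm (n - 1) (fun i => Cc n (S i) * Cc n (S i))).
  { replace n with (S (n - 1)) at 1 by lia. rewrite sm_shift, Cc0. auto. }
  assert (H3 : sm m (fun i => Cc n (S i) * Cc n (S i)) <= sm (n-1) (fun i => Cc n (S i) * Cc n (S i))).
  { apply sm_mono. lia. intros; pose proof (C_nonneg n (S i)); nra. }
  assert (H4 : Ts m / 4 - INR m * u (n - m) / 2 <= sm m (fun i => Cc n (S i) * Cc n (S i))).
  { replace (Ts m / 4 - INR m * u (n - m) / 2) with (sm m (fun i => (inner_sum i / 2) ^ 2 - u (n - m) / 2)).
    - apply sm_le. intros i Hi. pose proof (C_sq_lower n i ltac:(lia)).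
      pose proof (u_anti (n - m) (n - S i) ltac:(lia)). lra.
    - rewrite sm_minus, sm_const. unfold Ts. unfold Rdiv. rewrite (Rmult_comm (sm m _)), <- sm_scal.
      f_equal. apply sm_ext; intros; field. ring. }
  lra.
Qed.


Lemma m1_sq a : (-1)^a * (-1)^a = 1.
Proof. rewrite <- pow_add. replace (a + a)%nat with (2 * a)%nat by lia. rewrite pow_mult. replace ((-1)^2) with 1 by ring. apply pow1. Qed.

Lemma m1_par a b c : (a + b = 2 * c)%nat -> (-1)^a = (-1)^b.
Proof.
  intros H. assert (E : (-1)^a * (-1)^b = 1).
  { rewrite <- pow_add, H, pow_mult. replace ((-1)^2) with 1 by ring. apply pow1. }
  pose proof (m1_sq b). 
  transitivity ((-1)^a * ((-1)^b * (-1)^b)). rewrite H0; ring. rewrite <- Rmult_assoc, E. ring.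
Qed.

Lemma m1_S a : (-1)^(S a) = - (-1)^a.
Proof. simpl. ring. Qed.

Lemma m1_abs a : Rabs ((-1)^a) = 1.
Proof. rewrite <- RPow_abs. replace (Rabs (-1)) with 1. apply pow1. unfold Rabs; destruct (Rcase_abs (-1)); lra. Qed.

Definition Ls n := sm n (fun k => (-1)^k * u k).
Definition xx n i := 2 * INR i - 2 * INR n + 1.
Definition vv n i := (-1)^i / xx n i.

Lemma INR_lo n k : (k < n)%nat -> INR (n - 1 - k) = INR n - INR k - 1.
Proof. intros H. assert (INR n = INR (n-1-k) + INR k + 1). { rewrite <- plus_INR, <- S_INR. f_equal. lia. } lra. Qed.

Lemma vv_hi n k : vv n (n + k) = (-1)^n * ((-1)^k * u k).
Proof. unfold vv, xx, u. rewrite plus_INR, pow_add. pose proof (INR_ge0 k). field. lra. Qed.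

Lemma vv_lo n k : (k < n)%nat -> vv n (n - 1 - k) = (-1)^n * ((-1)^k * u k).
Proof.
  intros H. unfold vv, xx, u. rewrite INR_lo by auto.
  rewrite (m1_par (n - 1 - k) (S (n + k)) n) by lia. rewrite m1_S, pow_add.
  pose proof (INR_ge0 k). field. lra.
Qed.

Lemma sum_vv n : sm (2 * n) (vv n) = 2 * (-1)^n * Ls n.
Proof.
  replace (2 * n)%nat with (n + n)%nat by lia. rewrite sm_split, sm_rev.
  rewrite (sm_ext n _ (fun k => (-1)^n * ((-1)^k * u k))) by (intros; apply vv_lo; auto).
  rewrite (sm_ext n (fun i => vv n (n + i)%nat) (fun k => (-1)^n * ((-1)^k * u k))) by (intros; apply vv_hi).
  rewrite sm_scal. unfold Ls. ring.
Qed.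

Lemma sum_vv2 n : sm (2 * n) (fun i => vv n i * vv n i) = 2 * Qs n.
Proof.
  replace (2 * n)%nat with (n + n)%nat by lia. rewrite sm_split, sm_rev.
  rewrite (sm_ext n _ (fun k => u k * u k)).
  2:{ intros k Hk. rewrite vv_lo by auto. transitivity (((-1)^n * (-1)^n) * ((-1)^k * (-1)^k) * (u k * u k)). ring. rewrite !m1_sq; ring. }
  rewrite (sm_ext n (fun i => vv n (n + i)%nat * vv n (n + i)%nat) (fun k => u k * u k)).
  2:{ intros. rewrite vv_hi. transitivity (((-1)^n * (-1)^n) * ((-1)^i * (-1)^i) * (u i * u i)). ring. rewrite !m1_sq; ring. }
  unfold Qs. ring.
Qed.

Lemma xx_nz n i : xx n i <> 0.
Proof.
  unfold xx. destruct (Nat.le_gt_cases n i).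
  - apply le_INR in H. lra.
  - assert (INR (S i) <= INR n) by (apply le_INR; lia). rewrite S_INR in H0. lra.
Qed.

Definition hh n i k := if Nat.eqb i k then 0 else (-1)^(i+k) / (2 * (INR k - INR i) * xx n i).
Definition G n i := sm (2 * n) (fun k => if Nat.eqb i k then 0 else (-1)^(i+k) / (INR k - INR i)).

Lemma vv_prod n i k : vv n i * vv n k = (if Nat.eqb i k then vv n i * vv n i else 0) + (hh n i k + hh n k i).
Proof.
  unfold hh. destruct (Nat.eqb_spec i k); destruct (Nat.eqb_spec k i); try lia.
  - subst. ring.
  - unfold vv. pose proof (xx_nz n i). pose proof (xx_nz n k).
    assert (INR k - INR i <> 0). { intro. apply n0. apply INR_eq. lra. }
    assert (xx n k - xx n i = 2 * (INR k - INR i)) by (unfold xx; ring).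
    replace (k + i)%nat with (i + k)%nat by lia. rewrite pow_add.
    unfold xx in *. field. repeat split; auto; lra.
Qed.

Lemma sum_hh n i : sm (2 * n) (fun k => hh n i k) = G n i / (2 * xx n i).
Proof.
  unfold G, hh, Rdiv. rewrite Rmult_comm, <- sm_scal. apply sm_ext. intros k _.
  destruct (Nat.eqb_spec i k). ring.
  pose proof (xx_nz n i). assert (INR k - INR i <> 0). { intro. apply n0. apply INR_eq. lra. }
  field. auto.
Qed.

Theorem four_L2 n : 4 * (Ls n * Ls n) = 2 * Qs n + sm (2 * n) (fun i => G n i / xx n i).
Proof.
  assert (E : sm (2*n) (vv n) * sm (2*n) (vv n) = 4 * (Ls n * Ls n)).
  { rewrite sum_vv. transitivity (4 * ((-1)^n * (-1)^n) * (Ls n * Ls n)). ring. rewrite m1_sq. ring. }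
  rewrite <- E, sm_mul.
  rewrite (sm_ext (2*n) _ (fun i => vv n i * vv n i + sm (2*n) (fun k => hh n i k) + sm (2*n) (fun k => hh n k i))).
  2:{ intros i Hi. rewrite (sm_ext (2*n) _ (fun k => (if Nat.eqb i k then vv n i * vv n i else 0) + (hh n i k + hh n k i))) by (intros; apply vv_prod).
      rewrite sm_plus, sm_plus, sm_single. destruct (Nat.ltb_spec i (2*n)); try lia. rewrite Rplus_assoc; reflexivity. }
  rewrite !sm_plus. rewrite sum_vv2.
  assert (HZ : sm (2 * n) (fun i => sm (2 * n) (fun k => hh n k i)) = sm (2 * n) (fun i => sm (2 * n) (fun k => hh n i k)))
    by (symmetry; apply (sm_swap (2*n) (2*n) (fun i k => hh n i k))).
  assert (HY : sm (2 * n) (fun i => sm (2 * n) (fun k => hh n i k)) = sm (2 * n) (fun i => G n i / (2 * xx n i)))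
    by (apply sm_ext; intros; apply sum_hh).
  assert (HG : sm (2 * n) (fun i => G n i / xx n i) = 2 * sm (2 * n) (fun i => G n i / (2 * xx n i))).
  { rewrite <- sm_scal. apply sm_ext. intros. pose proof (xx_nz n i). field. auto. }
  rewrite HZ, HY, HG. ring.
Qed.


Definition Em m := sm m (fun t => (-1)^(S t) * / (INR t + 1)).

Lemma alt_gen (U : nat -> R) : (forall k, 0 <= U (S k) <= U k) ->
  forall m p, 0 <= (-1)^p * sm m (fun t => (-1)^(p+t) * U (p+t)%nat) <= U p.
Proof.
  intros HU m. induction m; intros p.
  - simpl. specialize (HU p). lra.
  - rewrite sm_shift. rewrite Nat.add_0_r.
    rewrite (sm_ext m (fun i => (-1)^(p + S i) * U (p + S i)%nat) (fun t => (-1)^(S p + t) * U (S p + t)%nat))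
      by (intros; rewrite Nat.add_succ_r; auto).
    specialize (IHm (S p)). rewrite m1_S in IHm. specialize (HU p).
    set (Y := sm m (fun t => (-1)^(S p + t) * U (S p + t)%nat)) in *.
    assert (E : (-1)^p * ((-1)^p * U p + Y) = U p + (-1)^p * Y).
    { rewrite Rmult_plus_distr_l, <- Rmult_assoc, m1_sq. ring. }
    rewrite E. assert (- (-1)^p * Y = - ((-1)^p * Y)) by ring. lra.
Qed.

Lemma Em_diff a b : (a <= b)%nat -> Rabs (Em b - Em a) <= / (INR a + 1).
Proof.
  intros H. unfold Em. replace b with (a + (b - a))%nat by lia. rewrite sm_split.
  set (U := fun s : nat => / (INR s + 1)).
  assert (HU : forall k, 0 <= U (S k) <= U k).
  { intros k. unfold U. rewrite S_INR. pose proof (INR_ge0 k). split.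
    left; apply Rinv_0_lt_compat; lra. apply Rinv_le_contravar; lra. }
  pose proof (alt_gen U HU (b - a) a) as Hb.
  rewrite (sm_ext (b - a) (fun i => (-1)^(S (a + i)) * / (INR (a + i) + 1)) (fun t => - ((-1)^(a+t) * U (a + t)%nat)))
    by (intros; unfold U; rewrite m1_S; ring).
  rewrite sm_opp.
  set (Y := sm (b - a) (fun t => (-1)^(a+t) * U (a + t)%nat)) in *.
  replace (sm a (fun t => (-1)^(S t) * / (INR t + 1)) + - Y - sm a (fun t => (-1)^(S t) * / (INR t + 1))) with (- Y) by ring.
  rewrite Rabs_Ropp. replace Y with ((-1)^a * ((-1)^a * Y)) by (rewrite <- Rmult_assoc, m1_sq; ring).
  rewrite Rabs_mult, m1_abs. rewrite Rabs_right by lra. fold (U a). lra.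
Qed.

Lemma G_form n i : (i < 2 * n)%nat -> G n i = Em (2 * n - 1 - i) - Em i.
Proof.
  intros Hi. unfold G. replace (2 * n)%nat with (i + S (2 * n - 1 - i))%nat at 1 by lia.
  rewrite sm_split, sm_shift. rewrite Nat.add_0_r, Nat.eqb_refl.
  set (r := (2 * n - 1 - i)%nat).
  rewrite (sm_ext r _ (fun t => (-1)^(S t) * / (INR t + 1))).
  2:{ intros t Ht. destruct (Nat.eqb_spec i (i + S t)); try lia.
      rewrite (m1_par (i + (i + S t)) (S t) (i + S t)) by lia.
      rewrite plus_INR, S_INR. pose proof (INR_ge0 t). field. lra. }
  rewrite sm_rev.
  rewrite (sm_ext i _ (fun t => - ((-1)^(S t) * / (INR t + 1)))).
  2:{ intros t Ht. destruct (Nat.eqb_spec i (i - 1 - t)); try lia.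
      rewrite (m1_par (i + (i - 1 - t)) (S t) i) by lia.
      rewrite INR_lo by auto. pose proof (INR_ge0 t). field. lra. }
  rewrite sm_opp. unfold Em. fold r. ring.
Qed.

Definition Hs n := sm n (fun k => / (INR k + 1)).

Lemma err_bound n : Rabs (sm (2 * n) (fun i => G n i / xx n i)) <= 6 * Hs n / (2 * INR n + 1).
Proof.
  eapply Rle_trans. apply sm_abs.
  replace (2 * n)%nat with (n + n)%nat by lia. rewrite sm_split, sm_rev.
  assert (Hb : forall k, (k < n)%nat -> Rabs (G n (n - 1 - k) / xx n (n - 1 - k)) <= u k * / (INR n - INR k)
                 /\ Rabs (G n (n + k) / xx n (n + k)) <= u k * / (INR n - INR k)).
  { intros k Hk.
    assert (Hx1 : xx n (n + k) = 2 * INR k + 1) by (unfold xx; rewrite plus_INR; ring).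
    assert (Hx2 : xx n (n - 1 - k) = -(2 * INR k + 1)).
    { unfold xx. rewrite INR_lo by auto. ring. }
    assert (Hd : INR n - INR k = INR (n - 1 - k) + 1) by (rewrite INR_lo by auto; ring).
    pose proof (INR_ge0 k).
    split.
    -       rewrite G_form by lia. replace (2 * n - 1 - (n - 1 - k))%nat with (n + k)%nat by lia.
      unfold Rdiv. rewrite Rabs_mult. 
      rewrite Hx2.
      rewrite Rabs_inv, Rabs_Ropp, (Rabs_right (2 * INR k + 1)) by lra. rewrite Hd.
      rewrite Rmult_comm. apply Rmult_le_compat_l. left; apply Rinv_0_lt_compat; lra.
      apply Em_diff. lia.
    - rewrite G_form by lia. replace (2 * n - 1 - (n + k))%nat with (n - 1 - k)%nat by lia.
      unfold Rdiv. rewrite Rabs_mult, Hx1. rewrite Rabs_inv, (Rabs_right (2 * INR k + 1)) by lra. rewrite Hd.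
      rewrite Rmult_comm. apply Rmult_le_compat_l. left; apply Rinv_0_lt_compat; lra.
      rewrite Rabs_minus_sym. apply Em_diff. lia. }
  assert (HS : sm n (fun k => u k * / (INR n - INR k)) <= 3 * Hs n / (2 * INR n + 1)).
  { rewrite (sm_ext n _ (fun k => / (2 * INR n + 1) * (2 * u k + / (INR n - INR k)))).
    2:{ intros k Hk. assert (INR k + 1 <= INR n) by (rewrite <- S_INR; apply le_INR; lia).
        pose proof (INR_ge0 k). unfold u. field. repeat split; lra. }
    rewrite sm_scal, sm_plus, sm_scal.
    assert (H1 : sm n u <= Hs n) by (apply sm_le; intros; apply u_le_inv).
    assert (H2 : sm n (fun k => / (INR n - INR k)) = Hs n).
    { rewrite sm_rev. apply sm_ext. intros k Hk. rewrite INR_lo by auto. f_equal. ring. }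
    rewrite H2. pose proof (INR_ge0 n).
    unfold Rdiv. rewrite (Rmult_comm (3 * Hs n)). apply Rmult_le_compat_l.
    left; apply Rinv_0_lt_compat; lra. lra. }
  assert (sm n (fun i => Rabs (G n (n - 1 - i) / xx n (n - 1 - i))) +
          sm n (fun i => Rabs (G n (n + i) / xx n (n + i))) <= 2 * sm n (fun k => u k * / (INR n - INR k))).
  { replace (2 * sm n (fun k => u k * / (INR n - INR k))) with
       (sm n (fun k => u k * / (INR n - INR k)) + sm n (fun k => u k * / (INR n - INR k))) by ring.
    apply Rplus_le_compat; apply sm_le; intros; apply Hb; auto. }
  lra.
Qed.


Lemma Hs_le n : Hs n <= INR n.
Proof.
  unfold Hs. rewrite <- (Rmult_1_r (INR n)), <- sm_const. apply sm_le. intros.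
  pose proof (INR_ge0 i). rewrite <- Rinv_1. apply Rinv_le_contravar; lra.
Qed.

Lemma Hs_nonneg n : 0 <= Hs n.
Proof. unfold Hs. apply sm_nonneg. intros. pose proof (INR_ge0 i). left; apply Rinv_0_lt_compat; lra. Qed.

Lemma Hs_sq n : Hs n * Hs n <= 4 * INR n.
Proof.
  induction n. unfold Hs; simpl; lra.
  unfold Hs in *. change (sm (S n) (fun k => / (INR k + 1))) with (sm n (fun k => / (INR k + 1)) + / (INR n + 1)).
  pose proof (Hs_le n). pose proof (Hs_nonneg n). unfold Hs in *. rewrite S_INR.
  set (h := sm n (fun k => / (INR k + 1))) in *. pose proof (INR_ge0 n).
  assert (0 < / (INR n + 1) <= 1). { split. apply Rinv_0_lt_compat; lra. rewrite <- Rinv_1. apply Rinv_le_contravar; lra. }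
  assert (h * / (INR n + 1) <= 1).
  { apply Rmult_le_reg_r with (INR n + 1). lra. rewrite Rmult_assoc, Rinv_l by lra. lra. }
  nra.
Qed.

Lemma inv_n_lim : is_lim_seq (fun n => / (INR n + 1)) 0.
Proof.
  assert (H : is_lim_seq (fun n => INR n + 1) p_infty).
  { apply (is_lim_seq_ext (fun n => INR (S n))). intros; apply S_INR.
    apply (is_lim_seq_incr_1 INR). apply is_lim_seq_INR. }
  apply (is_lim_seq_inv _ _ H). discriminate.
Qed.

Lemma sqlim (e w : nat -> R) : (forall n, 0 <= e n) -> (forall n, e n * e n <= w n) ->
  is_lim_seq w 0 -> is_lim_seq e 0.
Proof.
  intros He Hw Hl. apply is_lim_seq_spec. apply is_lim_seq_spec in Hl.
  intros eps. assert (Heps : 0 < eps * eps) by (pose proof (cond_pos eps); nra).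
  destruct (Hl (mkposreal _ Heps)) as [N HN]. exists N. intros n Hn.
  specialize (HN n Hn). simpl in HN. rewrite Rminus_0_r in *. rewrite Rabs_right in * by (auto; specialize (He n); lra).
  pose proof (Hw n). pose proof (He n). pose proof (cond_pos eps).
  assert (w n < eps * eps). { pose proof (Rle_abs (w n)). lra. } nra.
Qed.

Lemma diff_lim : is_lim_seq (fun n => 4 * (Ls n * Ls n) - 2 * Qs n) 0.
Proof.
  apply is_lim_seq_abs_0.
  apply (sqlim _ (fun n => 36 * / (INR n + 1))).
  - intros; apply Rabs_pos.
  - intros n. rewrite four_L2. replace (2 * Qs n + sm (2 * n) (fun i => G n i / xx n i) - 2 * Qs n)
      with (sm (2 * n) (fun i => G n i / xx n i)) by ring.
    pose proof (err_bound n). pose proof (Rabs_pos (sm (2 * n) (fun i => G n i / xx n i))).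
    set (r := Rabs _) in *. pose proof (Hs_sq n). pose proof (Hs_nonneg n). pose proof (INR_ge0 n).
    assert (r * r <= (6 * Hs n / (2 * INR n + 1)) * (6 * Hs n / (2 * INR n + 1))) by (apply Rmult_le_compat; lra).
    eapply Rle_trans. apply H4.
    replace ((6 * Hs n / (2 * INR n + 1)) * (6 * Hs n / (2 * INR n + 1))) with (36 * (Hs n * Hs n) / ((2 * INR n + 1) * (2 * INR n + 1))) by (field; lra).
    apply Rle_trans with (36 * (4 * INR n) / ((2 * INR n + 1) * (2 * INR n + 1))).
    { unfold Rdiv. apply Rmult_le_compat_r. left. apply Rinv_0_lt_compat. nra. lra. }
    assert (0 < (2 * INR n + 1) * (2 * INR n + 1) * (INR n + 1)) by (repeat apply Rmult_lt_0_compat; lra).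
    apply Rmult_le_reg_r with ((2 * INR n + 1) * (2 * INR n + 1) * (INR n + 1)). lra.
    unfold Rdiv. field_simplify; [ pose proof (pow2_ge_0 (INR n)); lra | lra | lra ].
  - replace 0 with (36 * 0) by ring. apply (is_lim_seq_scal_l _ 36 0). apply inv_n_lim.
Qed.

Lemma Ls_lim : is_lim_seq Ls (PI / 4).
Proof.
  apply is_lim_seq_incr_1.
  assert (H : Un_cv (fun N => sum_f_R0 (tg_alt PI_tg) N) (PI / 4)).
  { rewrite <- Alt_PI_eq. unfold Alt_PI. destruct exist_PI as [l Hl].
    replace (4 * l / 4) with l by field. auto. }
  apply is_lim_seq_Reals in H. revert H. apply is_lim_seq_ext.
  intros N. rewrite sum_f_sm. unfold Ls. apply sm_ext. intros k _.
  unfold tg_alt, PI_tg, u. f_equal. f_equal. rewrite plus_INR, mult_INR. simpl. ring.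
Qed.

Theorem Qs_lim : is_lim_seq Qs (PI ^ 2 / 8).
Proof.
  pose proof (is_lim_seq_mult' _ _ _ _ Ls_lim Ls_lim) as H1.
  pose proof (is_lim_seq_scal_l _ 4 _ H1) as H2. simpl in H2.
  pose proof (is_lim_seq_minus' _ _ _ _ H2 diff_lim) as H3.
  pose proof (is_lim_seq_scal_l _ (/2) _ H3) as H4. simpl in H4.
  replace (PI ^ 2 / 8) with (/ 2 * (4 * (PI / 4 * (PI / 4)) - 0)) by field.
  revert H4. apply is_lim_seq_ext. intros n. field.
Qed.


Lemma mono_gen (v : nat -> R) : (forall n, v n <= v (S n)) -> forall n k, (n <= k)%nat -> v n <= v k.
Proof. intros H n k Hk. induction Hk. lra. specialize (H m). lra. Qed.

Lemma incr_le_lim (v : nat -> R) (l : R) : (forall n, v n <= v (S n)) -> is_lim_seq v l -> forall n, v n <= l.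
Proof.
  intros H Hl n. assert (Rbar_le (v n) l).
  { apply (is_lim_seq_le_loc (fun _ => v n) v). exists n. intros k Hk. apply mono_gen; auto.
    apply is_lim_seq_const. auto. }
  simpl in H0. auto.
Qed.

Lemma Qs_incr n : Qs n <= Qs (S n).
Proof. unfold Qs. simpl. pose proof (u_pos n). nra. Qed.

Lemma Ts_incr n : Ts n <= Ts (S n).
Proof. unfold Ts. simpl. pose proof (inner_nonneg n). nra. Qed.

Lemma Qs_nonneg n : 0 <= Qs n.
Proof. unfold Qs. apply sm_nonneg. intros. pose proof (u_pos i). nra. Qed.

Lemma u_lim : is_lim_seq u 0.
Proof.
  apply (is_lim_seq_le_le (fun _ => 0) u (fun n => / (INR n + 1))).
  intros; split. left; apply u_pos. apply u_le_inv.
  apply is_lim_seq_const. apply inv_n_lim.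
Qed.

Theorem Ts_lim : is_lim_seq Ts (PI ^ 4 / 32).
Proof.
  set (lam := PI ^ 2 / 8).
  pose proof Qs_lim as HQ. fold lam in HQ.
  assert (HQle : forall n, Qs n <= lam) by (apply incr_le_lim; auto; apply Qs_incr).
  assert (Hb : forall n, Ts n <= 2 * (lam * lam)).
  { intros n. pose proof (main_upper n). pose proof (HQle n). pose proof (Qs_nonneg n). nra. }
  destruct (ex_finite_lim_seq_incr Ts _ Ts_incr Hb) as [l Hl].
  assert (HTle : forall n, Ts n <= l) by (apply incr_le_lim; auto; apply Ts_incr).
  assert (H1 : l <= 2 * (lam * lam)).
  { assert (Rbar_le l (2 * (lam * lam))).
    { apply (is_lim_seq_le Ts (fun n => 2 * (Qs n * Qs n))). apply main_upper. auto.
      apply (is_lim_seq_scal_l _ 2 (lam * lam)). apply is_lim_seq_mult'; auto. }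
    auto. }
  assert (H2 : forall m, lam * lam + Ts m / 2 <= l).
  { intros m.
    assert (Rbar_le (lam * lam + Ts m / 2 - INR m * 0) l).
    { apply (is_lim_seq_le_loc (fun n => Qs n * Qs n + Ts m / 2 - INR m * u (n - m)) (fun _ => l)).
      - exists (S m). intros n Hn. eapply Rle_trans. apply main_lower. auto. apply HTle.
      - apply is_lim_seq_minus'. apply is_lim_seq_plus'. apply is_lim_seq_mult'; auto. apply is_lim_seq_const.
        apply is_lim_seq_mult'. apply is_lim_seq_const.
        apply (is_lim_seq_incr_n _ m). apply (is_lim_seq_ext u). intros; f_equal; lia. apply u_lim.
      - apply is_lim_seq_const. }
    simpl in H. lra. }
  assert (H3 : lam * lam + l / 2 <= l).
  { assert (Rbar_le (lam * lam + l / 2) l).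
    { apply (is_lim_seq_le (fun m => lam * lam + Ts m / 2) (fun _ => l)). auto.
      apply is_lim_seq_plus'. apply is_lim_seq_const. apply (is_lim_seq_div' _ _ l 2); [auto | apply is_lim_seq_const | discrR].
      apply is_lim_seq_const. }
    auto. }
  replace (PI ^ 4 / 32) with (2 * (lam * lam)) by (unfold lam; field).
  replace (2 * (lam * lam)) with l by lra. auto.
Qed.

Theorem mainTheorem1 :
  is_series (fun n : nat => (inner_sum n) ^ 2) (PI ^ 4 / 32).
Proof.
  change (is_lim_seq (sum_n (fun n : nat => (inner_sum n) ^ 2)) (PI ^ 4 / 32)).
  apply (is_lim_seq_ext (fun n => Ts (S n))).
  intros n. rewrite sum_n_Reals, sum_f_sm. auto.
  apply (is_lim_seq_incr_1 Ts). apply Ts_lim.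
Qed.
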